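(* Let $G$ be a compactly generated tdlc group, $\Gamma$ a Cayley–Abels graph for $G$, and $\mathcal{C}$ a nonempty chain (set totally ordered by inclusion) of closed normal subgroups of $G$. (1) Let $H=\overline{\bigcup_{N\in\mathcal{C}}N}$. Then $\mathrm{val}(H\backslash\Gamma)=\min\{\mathrm{val}(N\backslash\Gamma): N\in\mathcal{C}\}$. (2) Let $H'=\bigcap_{N\in\mathcal{C}}N$. Then $\mathrm{val}(H'\backslash\Gamma)=\max\{\mathrm{val}(N\backslash\Gamma): N\in\mathcal{C}\}$.
   Context: A Cayley–Abels graph for a tdlc group $G$ is a locally finite, connected simple graph together with a vertex-transitive action of $G$ by graph automorphisms with compact open vertex stabilizers. For a normal subgroup $N\trianglelefteq G$, the quotient graph $N\backslash\Gamma$ has as vertices the $N$-orbits $N\alpha$ on $\mathbf{V}\Gamma$, and two distinct orbits $N\alpha\ne N\beta$ are adjacent iff some $\alpha'\in N\alpha$ is adjacent in $\Gamma$ to some $\beta'\in N\beta$. Since $G$ acts vertex-transitively on $N\backslash\Gamma$, all its vertices have the same number of neighbours, denoted $\mathrm{val}(N\backslash\Gamma)$. *)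

(* Defs.v *)
From HB Require Import structures.
From Stdlib Require Import Relations.
From mathcomp Require Import all_boot monoid.
From mathcomp Require Import all_classical all_reals topology.
Set Implicit Arguments. Unset Strict Implicit. Unset Printing Implicit Defensive.
Local Open Scope classical_set_scope.

#[short(type="topGroupCarrierType")]
HB.structure Definition TopGroupCarrier := {G of Group G & Topological G}.

Notation gmul := (@monoid.mul _).
Notation gone := (@monoid.one _).
Notation ginv := (@monoid.inv _).

Definition topological_group (G : topGroupCarrierType) : Prop :=
  continuous (fun p : G * G => gmul p.1 p.2) /\ continuous (fun g : G => ginv g).

Definition is_subgroup (G : topGroupCarrierType) (H : set G) : Prop :=
  H gone /\ (forall x y, H x -> H y -> H (gmul x y)) /\ (forall x, H x -> H (ginv x)).

Definition is_normal (G : topGroupCarrierType) (N : set G) : Prop :=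
  is_subgroup N /\ forall g n, N n -> N (gmul (ginv g) (gmul n g)).

Definition closed_normal (G : topGroupCarrierType) (N : set G) : Prop :=
  is_normal N /\ closed N.

Definition tdlc (G : topGroupCarrierType) : Prop :=
  [/\ topological_group G, hausdorff_space G, locally_compact [set: G]
    & totally_disconnected [set: G]].

Definition compactly_generated (G : topGroupCarrierType) : Prop :=
  exists K : set G, compact K /\
    forall H : set G, is_subgroup H -> K `<=` H -> H = setT.

Definition cayley_abels (G : topGroupCarrierType) (V : Type)
    (adj : V -> V -> Prop) (act : G -> V -> V) : Prop :=
  [/\
      ((forall v w, adj v w -> adj w v) /\ (forall v, ~ adj v v)),
      (forall v, finite_set [set w | adj v w]),
      (forall v w, clos_refl_trans V adj v w),
      ((forall v, act gone v = v) /\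
       (forall g h v, act (gmul g h) v = act g (act h v)) /\
       (forall g v w, adj v w <-> adj (act g v) (act g w)))
    & ((forall v w, exists g, act g v = w) /\
      (forall v, compact [set g | act g v = v] /\ open [set g | act g v = v]))].

Definition orbit (G : topGroupCarrierType) (V : Type) (act : G -> V -> V)
    (N : set G) (v : V) : set V := [set act n v | n in N].

(* neighbours of the vertex N v in the quotient graph N \ Gamma *)
Definition quot_nbrs (G : topGroupCarrierType) (V : Type) (adj : V -> V -> Prop)
    (act : G -> V -> V) (N : set G) (v : V) : set (set V) :=
  [set O | (exists w, O = orbit act N w) /\ O <> orbit act N v /\
           exists a b, orbit act N v a /\ O b /\ adj a b].

(* val(N \ Gamma), computed at the vertex N v (the number of neighbours;    *)
(* this set is always finite for a Cayley-Abels graph).                      *)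
Definition qval (G : topGroupCarrierType) (V : Type) (adj : V -> V -> Prop)
    (act : G -> V -> V) (N : set G) (v : V) : nat :=
  xget 0%N [set n : nat | (quot_nbrs adj act N v #= `I_n)%card].

(* Main.v *)
Require Import Defs.
From HB Require Import structures.
From Stdlib Require Import Relations.
From mathcomp Require Import all_boot monoid.
From mathcomp Require Import all_classical all_reals topology.
Local Open Scope classical_set_scope.

Lemma chain_nat (I : Type) (C : set I) (Q : I -> nat -> Prop) (n : nat) :
  C !=set0 ->
  (forall i j, C i -> C j -> (forall k, Q i k -> Q j k) \/ (forall k, Q j k -> Q i k)) ->
  (forall k, (k < n)%N -> exists2 i, C i & Q i k) ->
  exists2 i, C i & forall k, (k < n)%N -> Q i k.
Proof.
move=> [i0 Ci0] Hc; elim: n => [|n IH] H.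
  by exists i0.
have [i Ci Hi] : exists2 i, C i & forall k, (k < n)%N -> Q i k.
  by apply: IH => k kn; apply: H; apply: ltnW.
have [j Cj Hj] := H n (ltnSn n).
have [Hij|Hji] := Hc i j Ci Cj.
- exists j => // k; rewrite ltnS leq_eqVlt => /orP[/eqP->//|kn].
  exact: Hij (Hi k kn).
- exists i => // k; rewrite ltnS leq_eqVlt => /orP[/eqP->|kn].
  + exact: Hji. 
  + exact: Hi.
Qed.

Lemma chain_pick (T I : Type) (C : set I) (P : I -> T -> Prop) (X : set T) :
  C !=set0 -> finite_set X ->
  (forall i j, C i -> C j -> (forall x, P i x -> P j x) \/ (forall x, P j x -> P i x)) ->
  (forall x, X x -> exists2 i, C i & P i x) ->
  exists2 i, C i & forall x, X x -> P i x.
Proof.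
move=> C0 /finite_setP[n Xn] Hc H.
rewrite card_eq_sym in Xn.
have [f [g fg gf]] : exists f : `I_n -> X, bijective f by apply/card_bijP.
pose Q i k := forall kk : `I_n, val kk = k -> P i (val (f kk)).
have [i Ci Hi] : exists2 i, C i & forall k, (k < n)%N -> Q i k.
  apply: chain_nat => //.
    move=> i j Ci Cj; case: (Hc i j Ci Cj) => HH; [left|right];
      by move=> k Hk kk Ekk; apply: HH; apply: Hk.
  move=> k kn.
  have kI : `I_n k by [].
  have [i Ci Pi] := H (val (f (SigSub (mem_set kI)))) (set_valP _).
  exists i => // kk Ekk.
  suff -> : kk = SigSub (mem_set kI) by [].
  by apply: val_inj.
exists i => // x Xx.
have := gf (SigSub (mem_set Xx)) => E.
have := Hi (val (g (SigSub (mem_set Xx)))) _ (g (SigSub (mem_set Xx))) erefl.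
rewrite E; apply.
have := set_valP (g (SigSub (mem_set Xx))); done.
Qed.

Section S.
Variables (G : topGroupCarrierType) (V : Type) (act : G -> V -> V).
Hypothesis Hact1 : forall v, act gone v = v.
Hypothesis HactM : forall g h v, act (gmul g h) v = act g (act h v).

Lemma act_inv g v : act (ginv g) (act g v) = v.
Proof. by rewrite -HactM mulVg Hact1. Qed.

Lemma orbit_refl {N : set G} a : is_subgroup N -> Defs.orbit act N a a.
Proof. by case=> N1 _; exists gone. Qed.

Lemma orbit_eq {N : set G} {a b} : is_subgroup N ->
  Defs.orbit act N a b -> Defs.orbit act N a = Defs.orbit act N b.
Proof.
case=> N1 [NM NV] [n Nn <-]; apply/seteqP; split => y [m Nm <-].
- exists (gmul m (ginv n)); first by apply: NM => //; apply: NV.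
  by rewrite HactM act_inv.
- by exists (gmul m n); [apply: NM | rewrite HactM].
Qed.

Lemma orbit_sym (N : set G) a b : is_subgroup N ->
  Defs.orbit act N a b -> Defs.orbit act N b a.
Proof. by move=> HN ab; rewrite -(orbit_eq HN ab); exact: orbit_refl. Qed.

Lemma orbit_eqP (N : set G) a b : is_subgroup N ->
  Defs.orbit act N a = Defs.orbit act N b <-> Defs.orbit act N a b.
Proof.
move=> HN; split; last exact: orbit_eq.
by move=> ->; exact: orbit_refl.
Qed.

Lemma qval_eq (adj : V -> V -> Prop) (N : set G) v n :
  (quot_nbrs adj act N v #= `I_n)%card -> qval adj act N v = n.
Proof.
move=> Hn; rewrite /qval; apply: xget_unique => // m Hm.
have Hm' : (quot_nbrs adj act N v #= `I_m)%card := Hm.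
have E : (`I_m #= `I_n)%card by rewrite card_eq_sym in Hm'; exact: card_eq_trans Hm' Hn.
move: E; rewrite card_eq_le => /andP[]; rewrite !card_le_II => h1 h2.
by apply/eqP; rewrite eqn_leq h1 h2.
Qed.

Variable adj : V -> V -> Prop.
Hypothesis Hadj : forall g v w, adj v w <-> adj (act g v) (act g w).

Lemma qn_char (N : set G) v : is_subgroup N ->
  quot_nbrs adj act N v =
  Defs.orbit act N @` [set w | adj v w /\ ~ Defs.orbit act N v w].
Proof.
move=> HN; apply/seteqP; split.
- move=> O [[w0 ->]] [Ov [a [b [[n Nn <-] [Ob ab]]]]].
  exists (act (ginv n) b).
    split.
      by rewrite (Hadj (ginv n)) act_inv in ab.
    move=> vw; apply: Ov.
    rewrite (orbit_eq HN Ob) (orbit_eq HN vw).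
    apply/esym/orbit_eq => //; exists n => //.
    by rewrite -HactM mulgV Hact1.
  apply/esym; rewrite (orbit_eq HN Ob); apply: orbit_eq => //.
  by exists (ginv n) => //; case: HN => _ [_]; apply.
- move=> O [w [vw nvw] <-]; split; first by exists w.
  split.
    by move=> E; apply: nvw; rewrite -E; exact: orbit_refl.
  by exists v, w; split; [exact: orbit_refl | split; [exact: orbit_refl|]].
Qed.

Lemma qval_le (N M : set G) v : is_subgroup N -> is_subgroup M ->
  finite_set [set w | adj v w] ->
  (forall a b, (a = v \/ adj v a) -> (b = v \/ adj v b) ->
     Defs.orbit act N a b -> Defs.orbit act M a b) ->
  (qval adj act M v <= qval adj act N v)%N.
Proof.
move=> HN HM fin H.
have finQ : forall K : set G, is_subgroup K -> finite_set (quot_nbrs adj act K v).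
  move=> K HK; rewrite qn_char //; apply: finite_image.
  by apply: sub_finite_set fin => w [].
have /finite_setP[n Hn] := finQ N HN.
have /finite_setP[m Hm] := finQ M HM.
rewrite (qval_eq _ _ _ _ Hn) (qval_eq _ _ _ _ Hm).
pose F (O : set V) := \bigcup_(w in [set w | O w /\ (w = v \/ adj v w)]) Defs.orbit act M w.
have sub : quot_nbrs adj act M v `<=` F @` quot_nbrs adj act N v.
  rewrite (qn_char _ v HM) (qn_char _ v HN).
  move=> _ [w [vw nMw] <-].
  have nNw : ~ Defs.orbit act N v w.
    by move=> Nw; apply: nMw; apply: H => //; [left|right].
  exists (Defs.orbit act N w); first by exists w.
  apply/seteqP; split.
  - move=> y [w' [Nww' Sw'] My].
    have : Defs.orbit act M w w' by apply: H => //; right.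
    by move/(orbit_eq HM) => ->.
  - move=> y My; exists w => //; split; [exact: orbit_refl | by right].
have : (`I_m #<= `I_n)%card.
  rewrite card_eq_sym in Hm.
  move: Hm; rewrite card_eq_le => /andP[Hm _].
  apply: card_le_trans Hm _.
  apply: card_le_trans (subset_card_le sub) _.
  apply: card_le_trans (card_image_le _ _) _.
  by move: Hn; rewrite card_eq_le => /andP[].
by rewrite card_le_II.
Qed.
End S.

Lemma chain_inter (G : topGroupCarrierType) (C : set (set G)) (K : set G) :
  compact K -> C !=set0 -> (forall N, C N -> closed N) ->
  (forall N M, C N -> C M -> N `<=` M \/ M `<=` N) ->
  (forall N, C N -> (K `&` N) !=set0) ->
  (K `&` \bigcap_(N in C) N) !=set0.
Proof.
move=> cK [N0 CN0] clC chC ne.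
pose F := filter_from C (fun N => K `&` N).
have FF : Filter F.
  apply: filter_from_filter; first by exists N0.
  move=> N M CN CM; case: (chC N M CN CM) => NM.
  - by exists N => //; move=> x [Kx Nx]; split; split => //; exact: NM.
  - by exists M => //; move=> x [Kx Mx]; split; split => //; exact: NM.
have PF : ProperFilter F by apply: filter_from_proper => // N CN; exact: ne.
have FK : F K by exists N0 => // x [].
have [p [Kp clp]] := cK F PF FK.
exists p; split => // N CN; apply: clC => //.
move=> B Bp.
have FN : F (K `&` N) by exists N.
have [x [[_ Nx] Bx]] := clp _ _ FN Bp.
by exists x.
Qed.

Lemma lmul_cont (G : topGroupCarrierType) : topological_group G ->
  forall h : G, continuous (fun g : G => gmul h g).
Proof.
move=> [Hm _] h x.
have P : (fun g : G => (h, g)) y @[y --> x] --> (h, x).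
  by apply: cvg_pair; [exact: cvg_cst | exact: cvg_id].
exact: (cvg_comp _ _ P (Hm (h, x))).
Qed.

Lemma fiber_nbhs (G : topGroupCarrierType) (V : Type) (act : G -> V -> V) :
  topological_group G ->
  (forall v, act gone v = v) ->
  (forall g h v, act (gmul g h) v = act g (act h v)) ->
  forall w b h, open [set g | act g w = w] -> act h w = b ->
  nbhs h [set g | act g w = b].
Proof.
move=> tg A1 AM w b h op hb.
have N1 : nbhs (gmul (ginv h) h) [set g | act g w = w].
  by rewrite mulVg; apply: open_nbhs_nbhs; split => //=; rewrite A1.
have H := @lmul_cont G tg (ginv h) h _ N1.
move: H; rewrite nbhsE /= => -[B oB BS]; exists B => // g /BS /= Hg.
by rewrite -[in LHS](mulVKg h g) AM Hg.
Qed.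

Lemma compact_fiber (G : topGroupCarrierType) (V : Type) (act : G -> V -> V) :
  topological_group G ->
  (forall v, act gone v = v) ->
  (forall g h v, act (gmul g h) v = act g (act h v)) ->
  forall a b h, compact [set g | act g a = a] -> act h a = b ->
  compact [set g | act g a = b].
Proof.
move=> tg A1 AM a b h cp hb.
have -> : [set g | act g a = b] = (fun g => gmul h g) @` [set g | act g a = a].
  apply/seteqP; split => g /=.
  - move=> gab; exists (gmul (ginv h) g); last by rewrite mulVKg.
    by rewrite AM gab -hb -AM mulVg A1.
  - by move=> [k ka <-]; rewrite AM ka.
apply: continuous_compact => //.
apply: continuous_subspaceT; exact: lmul_cont.
Qed.

Theorem mainTheorem14 (G : topGroupCarrierType) (V : Type)
    (adj : V -> V -> Prop) (act : G -> V -> V) (C : set (set G)) :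
  tdlc G -> compactly_generated G -> cayley_abels adj act ->
  C !=set0 ->
  (forall N, C N -> closed_normal N) ->
  (forall N M, C N -> C M -> N `<=` M \/ M `<=` N) ->
  forall v : V,
  (* (1) H = closure of the union of the chain: val = min over the chain *)
  (let H := closure (\bigcup_(N in C) N) in
   (exists2 N, C N & qval adj act H v = qval adj act N v) /\
   (forall N, C N -> (qval adj act H v <= qval adj act N v)%N)) /\
  (* (2) H' = intersection of the chain: val = max over the chain *)
  (let H' := \bigcap_(N in C) N in
   (exists2 N, C N & qval adj act H' v = qval adj act N v) /\
   (forall N, C N -> (qval adj act N v <= qval adj act H' v)%N)).
Proof.
move=> [tg _ _ _] _ [_ fin _ [A1 [AM Aadj]] [_ stab]] C0 Cn Cch v.
have [N0 CN0] := C0.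
have subC : forall N, C N -> is_subgroup N by move=> N /Cn [[]].
have orbit_mono : forall (N M : set G) a b, N `<=` M ->
    Defs.orbit act N a b -> Defs.orbit act M a b.
  by move=> N M a b NM [n Nn <-]; exists n => //; apply: NM.
pose S' := [set a | a = v \/ adj v a].
have finS : finite_set S'.
  have -> : S' = [set v] `|` [set w | adj v w] by [].
  by rewrite finite_setU; split => //; exact: finite_set1.
have Hle := @qval_le G V act A1 AM adj Aadj.
split.
- move=> H.
  pose U := \bigcup_(N in C) N.
  have HU : is_subgroup U.
    split; first by exists N0 => //; case: (subC N0 CN0).
    split.
      move=> x y [N CN Nx] [M CM My].
      case: (Cch N M CN CM) => NM.
      + exists M => //; case: (subC M CM) => _ [HM _]; apply: HM => //; exact: NM.
      + exists N => //; case: (subC N CN) => _ [HN _]; apply: HN => //; exact: NM.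
    move=> x [N CN Nx]; exists N => //; case: (subC N CN) => _ [_]; exact.
  have EO : Defs.orbit act H = Defs.orbit act U.
    apply: funext => a; apply/seteqP; split.
    - move=> _ [h Hh <-].
      have nb := @fiber_nbhs G V act tg A1 AM a _ h (proj2 (stab a)) (erefl (act h a)).
      have [g [Ug /= gh]] := Hh _ nb.
      by exists g.
    - move=> b [g Ug <-]; exists g => //; exact: subset_closure.
  have EQ : qval adj act H v = qval adj act U v by rewrite /qval /quot_nbrs EO.
  rewrite EQ.
  split; last first.
    move=> N CN; apply: (Hle) => //; first exact: subC.
    move=> a b _ _; apply: orbit_mono => x Nx; by exists N.
  have [N1 CN1 HN1] : exists2 N, C N & forall a, S' a -> forall b, S' b ->
      Defs.orbit act U a b -> Defs.orbit act N a b.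
    apply: chain_pick => //.
      move=> N M CN CM; case: (Cch N M CN CM) => NM; [left|right];
        by move=> a HA b Sb /(HA b Sb); apply: orbit_mono.
    move=> a Sa.
    apply: chain_pick => //.
      move=> N M CN CM; case: (Cch N M CN CM) => NM; [left|right];
        by move=> b HB /HB; apply: orbit_mono.
    move=> b Sb.
    have [[g [N CN Ng] gab]|nU] := pselect (Defs.orbit act U a b).
      by exists N => // _; exists g.
    by exists N0 => // /nU.
  exists N1 => //; apply/eqP; rewrite eqn_leq; apply/andP; split.
  + apply: (Hle) => //; first exact: subC.
    move=> a b _ _; apply: orbit_mono => x Nx; by exists N1.
  + apply: (Hle) => //; first exact: subC.
    by move=> a b Sa Sb; exact: (HN1 a Sa b Sb).
- move=> H'.
  have HH : is_subgroup H'.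
    split; first by move=> N CN; case: (subC N CN).
    split.
      by move=> x y Hx Hy N CN; case: (subC N CN) => _ [HM _]; apply: HM;
        [apply: Hx | apply: Hy].
    by move=> x Hx N CN; case: (subC N CN) => _ [_]; apply; apply: Hx.
  have cpt : forall a b, (forall N, C N -> Defs.orbit act N a b) ->
      Defs.orbit act H' a b.
    move=> a b Hab.
    have [h _ hab] := Hab N0 CN0.
    have cK := @compact_fiber G V act tg A1 AM a b h (proj1 (stab a)) hab.
    have ne : forall N, C N -> ([set g | act g a = b] `&` N) !=set0.
      by move=> N CN; have [g Ng gab] := Hab N CN; exists g.
    have [g [/= gab gH]] := @chain_inter G C _ cK C0 (fun N CN => proj2 (Cn N CN)) Cch ne.
    by exists g.
  split; last first.
    move=> N CN; apply: (Hle) => //; first exact: subC.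
    move=> a b _ _; apply: orbit_mono => x Hx; exact: (Hx _ CN).
  have [N1 CN1 HN1] : exists2 N, C N & forall a, S' a -> forall b, S' b ->
      Defs.orbit act N a b -> Defs.orbit act H' a b.
    apply: chain_pick => //.
      move=> N M CN CM; case: (Cch N M CN CM) => NM; [right|left];
        by move=> a HA b Sb /(orbit_mono _ _ _ _ NM) /(HA b Sb).
    move=> a Sa.
    apply: chain_pick => //.
      move=> N M CN CM; case: (Cch N M CN CM) => NM; [right|left];
        by move=> b HB /(orbit_mono _ _ _ _ NM) /HB.
    move=> b Sb.
    have [hH|nH] := pselect (Defs.orbit act H' a b).
      by exists N0.
    have [N CN nN] : exists2 N, C N & ~ Defs.orbit act N a b.
      apply: contrapT => nex; apply: nH; apply: cpt => N CN.
      by apply: contrapT => nN; apply: nex; exists N.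
    by exists N => // /nN.
  exists N1 => //; apply/eqP; rewrite eqn_leq; apply/andP; split.
  + apply: (Hle) => //; first exact: subC.
    by move=> a b Sa Sb; exact: (HN1 a Sa b Sb).
  + apply: (Hle) => //; first exact: subC.
    move=> a b _ _; apply: orbit_mono => x Hx; exact: (Hx _ CN1).
Qed.
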